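(* For every finite multiset $\Delta$ and formulas $\varphi,\psi,\chi$: if $\Delta,\Box\varphi\to\psi\Rightarrow\chi$ has a proof of height $h$ in $\mathsf{G4iSLt}$, then $\Delta,\psi\Rightarrow\chi$ has a proof in $\mathsf{G4iSLt}$ of height at most $h$.
   Context: Formulas are built by the grammar $\varphi ::= p \mid \bot \mid \varphi\land\varphi \mid \varphi\lor\varphi \mid \varphi\to\varphi \mid \Box\varphi$, with $p$ ranging over a countably infinite set of propositional variables. For a multiset $\Gamma$, $\Box\Gamma=\{\Box\psi:\psi\in\Gamma\}$; a boxed formula is one of the form $\Box\psi$. A sequent is $\Gamma\Rightarrow\chi$ with $\Gamma$ a finite multiset of formulas and $\chi$ a formula. The sequent calculus $\mathsf{G4iSLt}$ has the following rules, where $p$ is a propositional variable and $\Phi$ always denotes a multiset containing no boxed formula: (⊥L) $\bot,\Gamma\Rightarrow\chi$ (no premise); (IdP) $\Gamma,p\Rightarrow p$ (no premise); (∧L) from $\Gamma,\varphi,\psi\Rightarrow\chi$ infer $\Gamma,\varphi\land\psi\Rightarrow\chi$; (∧R) from $\Gamma\Rightarrow\varphi$ and $\Gamma\Rightarrow\psi$ infer $\Gamma\Rightarrow\varphi\land\psi$; (∨L) from $\Gamma,\varphi\Rightarrow\chi$ and $\Gamma,\psi\Rightarrow\chi$ infer $\Gamma,\varphi\lor\psi\Rightarrow\chi$; (∨R$_i$), $i\in\{1,2\}$: from $\Gamma\Rightarrow\varphi_i$ infer $\Gamma\Rightarrow\varphi_1\lor\varphi_2$; (p→L) from $\Gamma,p,\varphi\Rightarrow\chi$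 infer $\Gamma,p,p\to\varphi\Rightarrow\chi$; (→R) from $\Gamma,\varphi\Rightarrow\psi$ infer $\Gamma\Rightarrow\varphi\to\psi$; (□→L) from $\Phi,\Gamma,\psi,\Box\varphi\Rightarrow\varphi$ and $\Phi,\Box\Gamma,\psi\Rightarrow\chi$ infer $\Phi,\Box\Gamma,\Box\varphi\to\psi\Rightarrow\chi$; (SLtR) from $\Phi,\Gamma,\Box\varphi\Rightarrow\varphi$ infer $\Phi,\Box\Gamma\Rightarrow\Box\varphi$; (∧→L) from $\Gamma,\varphi\to(\psi\to\chi)\Rightarrow\delta$ infer $\Gamma,(\varphi\land\psi)\to\chi\Rightarrow\delta$; (∨→L) from $\Gamma,\varphi\to\chi,\psi\to\chi\Rightarrow\delta$ infer $\Gamma,(\varphi\lor\psi)\to\chi\Rightarrow\delta$; (→→L) from $\Gamma,\psi\to\chi\Rightarrow\varphi\to\psi$ and $\Gamma,\chi\Rightarrow\delta$ infer $\Gamma,(\varphi\to\psi)\to\chi\Rightarrow\delta$. A proof of a sequent $S$ is a finite tree of sequents with root $S$ in which each interior node together with its children forms an instance of a rule (conclusion, premises) and each leaf is the conclusion of a premise-free rule; $S$ is provable if it has a proof. The height of a proof is the maximum number of nodes on a path from the root to a leaf. *)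

(* Defs.v *)
From Stdlib Require Import List Permutation.
Import ListNotations.

Inductive form : Type :=
| Var : nat -> form
| Bot : form
| And : form -> form -> form
| Or  : form -> form -> form
| Imp : form -> form -> form
| Box : form -> form.

(* A sequent Gamma => chi; Gamma is a finite multiset, represented by a list
   taken up to permutation. *)
Definition sequent : Type := (list form * form)%type.

Definition seq_eq (s t : sequent) : Prop :=
  Permutation (fst s) (fst t) /\ snd s = snd t.

Definition is_boxed (f : form) : Prop :=
  match f with Box _ => True | _ => False end.

Definition box_free (Phi : list form) : Prop :=
  Forall (fun f => ~ is_boxed f) Phi.

Inductive rule0 : list sequent -> sequent -> Prop :=
| R_BotL G c : rule0 [] (Bot :: G, c)
| R_IdP G p : rule0 [] (Var p :: G, Var p)
| R_AndL G a b c : rule0 [(a :: b :: G, c)] (And a b :: G, c)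
| R_AndR G a b : rule0 [(G, a); (G, b)] (G, And a b)
| R_OrL G a b c : rule0 [(a :: G, c); (b :: G, c)] (Or a b :: G, c)
| R_OrR1 G a b : rule0 [(G, a)] (G, Or a b)
| R_OrR2 G a b : rule0 [(G, b)] (G, Or a b)
| R_pImpL G p a c :
    rule0 [(Var p :: a :: G, c)] (Var p :: Imp (Var p) a :: G, c)
| R_ImpR G a b : rule0 [(a :: G, b)] (G, Imp a b)
| R_BoxImpL Phi Gm phi psi c :
    box_free Phi ->
    rule0 [(Phi ++ Gm ++ [psi; Box phi], phi);
           (Phi ++ map Box Gm ++ [psi], c)]
          (Phi ++ map Box Gm ++ [Imp (Box phi) psi], c)
| R_SLtR Phi Gm phi :
    box_free Phi ->
    rule0 [(Phi ++ Gm ++ [Box phi], phi)] (Phi ++ map Box Gm, Box phi)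
| R_AndImpL G a b c d :
    rule0 [(Imp a (Imp b c) :: G, d)] (Imp (And a b) c :: G, d)
| R_OrImpL G a b c d :
    rule0 [(Imp a c :: Imp b c :: G, d)] (Imp (Or a b) c :: G, d)
| R_ImpImpL G a b c d :
    rule0 [(Imp b c :: G, Imp a b); (c :: G, d)] (Imp (Imp a b) c :: G, d).

Definition rule (ps : list sequent) (s : sequent) : Prop :=
  exists ps0 s0, rule0 ps0 s0 /\ Forall2 seq_eq ps ps0 /\ seq_eq s s0.

Inductive ptree : Type := Node : sequent -> list ptree -> ptree.

Definition root (t : ptree) : sequent := match t with Node s _ => s end.

(* A proof: every interior node with its children is a rule instance, and
   every leaf is the conclusion of a premise-free rule (rule [] s). *)
Inductive is_proof : ptree -> Prop :=
| is_proof_node s ts :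
    rule (map root ts) s -> Forall is_proof ts -> is_proof (Node s ts).

(* Height = maximum number of nodes on a path from the root to a leaf. *)
Fixpoint height (t : ptree) : nat :=
  match t with Node _ ts => S (list_max (map height ts)) end.

(* Main.v *)
Require Import Defs.
From Stdlib Require Import List Permutation.
From Stdlib Require Import Lia Arith.
Import ListNotations.

Definition form_eq_dec : forall x y : form, {x = y} + {x <> y}.
Proof. decide equality; apply Nat.eq_dec. Defined.

Definition ind (a y : form) : nat := if form_eq_dec a y then 1 else 0.

Lemma cnt_cons a l y : count_occ form_eq_dec (a::l) y = ind a y + count_occ form_eq_dec l y.
Proof. unfold ind; simpl; destruct (form_eq_dec a y); lia. Qed.
Lemma cnt_nil y : count_occ form_eq_dec [] y = 0.
Proof. reflexivity. Qed.
Lemma cnt_app l1 l2 y : count_occ form_eq_dec (l1++l2) y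
  = count_occ form_eq_dec l1 y + count_occ form_eq_dec l2 y.
Proof. apply count_occ_app. Qed.
Lemma map_Box_cons a l : map Box (a::l) = Box a :: map Box l.
Proof. reflexivity. Qed.

Ltac perm_tac :=
  repeat progress rewrite ?map_app, ?map_Box_cons in *;
  apply (proj2 (Permutation_count_occ form_eq_dec _ _));
  let y := fresh "y" in intro y;
  repeat match goal with H : Permutation _ _ |- _ =>
     let H' := fresh "HC" in
     pose proof (proj1 (Permutation_count_occ form_eq_dec _ _) H y) as H'; clear H end;
  repeat progress rewrite ?cnt_app, ?cnt_cons, ?cnt_nil in *; lia.

Definition D (n : nat) (s : sequent) : Prop :=
  exists t, is_proof t /\ seq_eq (root t) s /\ height t <= n.

Lemma seq_eq_trans s1 s2 s3 : seq_eq s1 s2 -> seq_eq s2 s3 -> seq_eq s1 s3.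
Proof. unfold seq_eq; intros [? ?] [? ?]; split; [eapply Permutation_trans; eauto | congruence]. Qed.
Lemma seq_eq_sym s1 s2 : seq_eq s1 s2 -> seq_eq s2 s1.
Proof. unfold seq_eq; intros [? ?]; split; [apply Permutation_sym; auto | congruence]. Qed.
Lemma seq_eq_refl s : seq_eq s s.
Proof. split; [apply Permutation_refl|reflexivity]. Qed.

Lemma D_perm n L L' c : D n (L,c) -> Permutation L L' -> D n (L',c).
Proof.
  intros [t [Ht [[Hp Hc] Hh]]] HP. exists t; split; [auto|split; [|auto]].
  split; simpl in *; [eapply Permutation_trans; eauto | auto].
Qed.

Lemma D_mono n m s : D n s -> n <= m -> D m s.
Proof. intros [t [A [B C]]] H; exists t; split; [auto|split; [auto|lia]]. Qed.

Lemma D_rule n ps s : rule0 ps s -> Forall (D n) ps -> D (S n) s.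
Proof.
  intros Hr HF.
  assert (exists ts, Forall is_proof ts /\ Forall2 seq_eq (map root ts) ps /\
            Forall (fun t => height t <= n) ts) as [ts [H1 [H2 H3]]].
  { clear Hr. induction HF as [|p ps' Hp HF IH].
    - exists []; repeat constructor.
    - destruct Hp as [t [Ht [He Hh]]]. destruct IH as [ts [A [B C]]]. exists (t::ts); repeat split; constructor; auto. }
  exists (Node s ts); split; [|split].
  - constructor; auto. exists ps, s. split; [auto|split; [auto|apply seq_eq_refl]].
  - apply seq_eq_refl.
  - simpl. apply le_n_S. apply (proj2 (list_max_le _ _)). apply Forall_map. exact H3.
Qed.

Lemma D_aux m : forall ts ps, Forall2 seq_eq (map root ts) ps -> Forall is_proof ts ->
  Forall (fun t => height t <= m) ts -> Forall (D m) ps.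
Proof.
  induction ts; intros ps H2 H1 H3; inversion H2; subst; constructor.
  - inversion H1; inversion H3; subst. exists a; auto.
  - inversion H1; inversion H3; subst. eapply IHts; eauto.
Qed.

Lemma D_inv n s : D n s -> exists m ps s0, n = S m /\ rule0 ps s0 /\ seq_eq s s0 /\ Forall (D m) ps.
Proof.
  intros [t [Ht [He Hh]]]. destruct Ht as [s' ts Hr HF].
  destruct Hr as [ps0 [s0 [Hr0 [HF2 Hs]]]].
  simpl in He, Hh. destruct n as [|m]; [lia|].
  exists m, ps0, s0. split; [reflexivity|]. split; [auto|]. split.
  - eapply seq_eq_trans; [apply seq_eq_sym; exact He| exact Hs].
  - eapply D_aux; eauto.
    apply (proj1 (Forall_map height (fun k => k <= m) ts)). apply (proj1 (list_max_le _ _)). lia.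
Qed.

Lemma boxed_dec f : (exists g, f = Box g) \/ ~ is_boxed f.
Proof. destruct f; try (right; simpl; tauto). left; eauto. Qed.

Lemma bf_rm P1 x P2 : box_free (P1 ++ x :: P2) -> box_free (P1 ++ P2).
Proof. unfold box_free; rewrite !Forall_app; intros [H1 H2]; inversion H2; auto. Qed.

Ltac fromhyp := match goal with H : D ?n (?L, ?c) |- D ?n (?L', ?c) =>
  apply (D_perm _ _ _ _ H); perm_tac end.

Ltac prems := repeat (apply Forall_cons; [fromhyp|]); apply Forall_nil.

Ltac splitF := repeat match goal with H : Forall _ (_ :: _) |- _ =>
  apply Forall_cons_iff in H; destruct H end.

Ltac locate Hp :=
  let Hin := fresh in
  pose proof (Permutation_in _ Hp (in_eq _ _)) as Hin;
  simpl in Hin; repeat (destruct Hin as [Hin|Hin]; [discriminate|]);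
  apply in_split in Hin; destruct Hin as [K1 [K2 ->]].

Ltac finish R := eapply D_perm; [apply (D_rule _ _ _ R); prems | perm_tac].

Lemma bf_cons x Phi : ~ is_boxed x -> box_free Phi -> box_free (x :: Phi).
Proof. intros; constructor; auto. Qed.

Lemma LemA : forall n G phi c, D n (Box phi :: G, c) -> D n (phi :: G, c).
Proof.
  induction n as [|m IH]; intros G phi c HD;
  apply D_inv in HD; destruct HD as [m' [ps [s0 [Hm [Hr [Hs HF]]]]]];
  [discriminate|]; injection Hm as <-.
  destruct Hr as [G' c'|G' p|G' a b c'|G' a b|G' a b c'|G' a b|G' a b|G' p a c'|G' a b
    |Phi Gm al be c' Hbf|Phi Gm al Hbf|G' a b c' d|G' a b c' d|G' a b c' d];
  destruct Hs as [Hp Hc]; simpl in Hp, Hc; subst c; splitF.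
  - locate Hp. finish (R_BotL (phi :: K1 ++ K2) c').
  - locate Hp. finish (R_IdP (phi :: K1 ++ K2) p).
  - locate Hp. assert (R1 : D m (phi :: a :: b :: K1 ++ K2, c')) by (apply IH; fromhyp).
    finish (R_AndL (phi :: K1 ++ K2) a b c').
  - assert (R1 : D m (phi :: G, a)) by (apply IH; fromhyp).
    assert (R2 : D m (phi :: G, b)) by (apply IH; fromhyp).
    finish (R_AndR (phi :: G) a b).
  - locate Hp. assert (R1 : D m (phi :: a :: K1 ++ K2, c')) by (apply IH; fromhyp).
    assert (R2 : D m (phi :: b :: K1 ++ K2, c')) by (apply IH; fromhyp).
    finish (R_OrL (phi :: K1 ++ K2) a b c').
  - assert (R1 : D m (phi :: G, a)) by (apply IH; fromhyp).
    finish (R_OrR1 (phi :: G) a b).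
  - assert (R1 : D m (phi :: G, b)) by (apply IH; fromhyp).
    finish (R_OrR2 (phi :: G) a b).
  - locate Hp. assert (R1 : D m (phi :: Var p :: a :: K1 ++ K2, c')) by (apply IH; fromhyp).
    finish (R_pImpL (phi :: K1 ++ K2) p a c').
  - assert (R1 : D m (phi :: a :: G, b)) by (apply IH; fromhyp).
    finish (R_ImpR (phi :: G) a b).
  - pose proof (Permutation_in _ Hp (in_eq _ _)) as Hin.
    apply in_app_or in Hin; destruct Hin as [Hin|Hin].
    { exfalso; unfold box_free in Hbf; rewrite Forall_forall in Hbf;
      apply (Hbf _ Hin); simpl; exact I. }
    apply in_app_or in Hin; destruct Hin as [Hin|Hin].
    2: { simpl in Hin; destruct Hin as [Hin|[]]; discriminate. }
    apply in_map_iff in Hin; destruct Hin as [zz [Hz Hin]]; injection Hz as ->.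
    apply in_split in Hin; destruct Hin as [K1 [K2 ->]].
    assert (R2 : D m (phi :: Phi ++ map Box (K1 ++ K2) ++ [be], c')) by (apply IH; fromhyp).
    destruct (boxed_dec phi) as [[z' ->]|Hnb].
    + assert (R1 : D m (z' :: Phi ++ (K1 ++ K2) ++ [be; Box al], al)) by (apply IH; fromhyp).
      finish (R_BoxImpL Phi (z' :: K1 ++ K2) al be c' Hbf).
    + finish (R_BoxImpL (phi :: Phi) (K1 ++ K2) al be c' (bf_cons _ _ Hnb Hbf)).
  - pose proof (Permutation_in _ Hp (in_eq _ _)) as Hin.
    apply in_app_or in Hin; destruct Hin as [Hin|Hin].
    { exfalso; unfold box_free in Hbf; rewrite Forall_forall in Hbf;
      apply (Hbf _ Hin); simpl; exact I. }
    apply in_map_iff in Hin; destruct Hin as [zz [Hz Hin]]; injection Hz as ->.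
    apply in_split in Hin; destruct Hin as [K1 [K2 ->]].
    destruct (boxed_dec phi) as [[z' ->]|Hnb].
    + assert (R1 : D m (z' :: Phi ++ (K1 ++ K2) ++ [Box al], al)) by (apply IH; fromhyp).
      finish (R_SLtR Phi (z' :: K1 ++ K2) al Hbf).
    + finish (R_SLtR (phi :: Phi) (K1 ++ K2) al (bf_cons _ _ Hnb Hbf)).
  - locate Hp. assert (R1 : D m (phi :: Imp a (Imp b c') :: K1 ++ K2, d)) by (apply IH; fromhyp).
    finish (R_AndImpL (phi :: K1 ++ K2) a b c' d).
  - locate Hp. assert (R1 : D m (phi :: Imp a c' :: Imp b c' :: K1 ++ K2, d)) by (apply IH; fromhyp).
    finish (R_OrImpL (phi :: K1 ++ K2) a b c' d).
  - locate Hp. assert (R1 : D m (phi :: Imp b c' :: K1 ++ K2, Imp a b)) by (apply IH; fromhyp).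
    assert (R2 : D m (phi :: c' :: K1 ++ K2, d)) by (apply IH; fromhyp).
    finish (R_ImpImpL (phi :: K1 ++ K2) a b c' d).
Qed.

Lemma LemB : forall n G phi psi c, D n (Imp (Box phi) psi :: G, c) -> D n (psi :: G, c).
Proof.
  induction n as [|m IH]; intros G phi psi c HD;
  apply D_inv in HD; destruct HD as [m' [ps [s0 [Hm [Hr [Hs HF]]]]]];
  [discriminate|]; injection Hm as <-.
  destruct Hr as [G' c'|G' p|G' a b c'|G' a b|G' a b c'|G' a b|G' a b|G' p a c'|G' a b
    |Phi Gm al be c' Hbf|Phi Gm al Hbf|G' a b c' d|G' a b c' d|G' a b c' d];
  destruct Hs as [Hp Hc]; simpl in Hp, Hc; subst c; splitF.
  - locate Hp. finish (R_BotL (psi :: K1 ++ K2) c').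
  - locate Hp. finish (R_IdP (psi :: K1 ++ K2) p).
  - locate Hp. assert (R1 : D m (psi :: a :: b :: K1 ++ K2, c')) by (apply (IH _ phi); fromhyp).
    finish (R_AndL (psi :: K1 ++ K2) a b c').
  - assert (R1 : D m (psi :: G, a)) by (apply (IH _ phi); fromhyp).
    assert (R2 : D m (psi :: G, b)) by (apply (IH _ phi); fromhyp).
    finish (R_AndR (psi :: G) a b).
  - locate Hp. assert (R1 : D m (psi :: a :: K1 ++ K2, c')) by (apply (IH _ phi); fromhyp).
    assert (R2 : D m (psi :: b :: K1 ++ K2, c')) by (apply (IH _ phi); fromhyp).
    finish (R_OrL (psi :: K1 ++ K2) a b c').
  - assert (R1 : D m (psi :: G, a)) by (apply (IH _ phi); fromhyp).
    finish (R_OrR1 (psi :: G) a b).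
  - assert (R1 : D m (psi :: G, b)) by (apply (IH _ phi); fromhyp).
    finish (R_OrR2 (psi :: G) a b).
  - locate Hp. assert (R1 : D m (psi :: Var p :: a :: K1 ++ K2, c')) by (apply (IH _ phi); fromhyp).
    finish (R_pImpL (psi :: K1 ++ K2) p a c').
  - assert (R1 : D m (psi :: a :: G, b)) by (apply (IH _ phi); fromhyp).
    finish (R_ImpR (psi :: G) a b).
  - pose proof (Permutation_in _ Hp (in_eq _ _)) as Hin.
    apply in_app_or in Hin; destruct Hin as [Hin|Hin].
    { apply in_split in Hin; destruct Hin as [K1 [K2 ->]].
      pose proof (bf_rm _ _ _ Hbf) as Hbf'.
      assert (R1 : D m (psi :: K1 ++ K2 ++ Gm ++ [be; Box al], al)) by (apply (IH _ phi); fromhyp).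
      assert (R2 : D m (psi :: K1 ++ K2 ++ map Box Gm ++ [be], c')) by (apply (IH _ phi); fromhyp).
      destruct (boxed_dec psi) as [[z ->]|Hnb].
      + assert (R3 : D m (z :: K1 ++ K2 ++ Gm ++ [be; Box al], al)) by (apply LemA; fromhyp).
        finish (R_BoxImpL (K1 ++ K2) (z :: Gm) al be c' Hbf').
      + finish (R_BoxImpL (psi :: K1 ++ K2) Gm al be c' (bf_cons _ _ Hnb Hbf')). }
    apply in_app_or in Hin; destruct Hin as [Hin|Hin].
    { apply in_map_iff in Hin; destruct Hin as [zz [Hz _]]; discriminate. }
    simpl in Hin; destruct Hin as [Hin|[]]. injection Hin as -> ->.
    apply (D_mono m); [fromhyp | lia].
  - pose proof (Permutation_in _ Hp (in_eq _ _)) as Hin.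
    apply in_app_or in Hin; destruct Hin as [Hin|Hin].
    2: { apply in_map_iff in Hin; destruct Hin as [zz [Hz _]]; discriminate. }
    apply in_split in Hin; destruct Hin as [K1 [K2 ->]].
    pose proof (bf_rm _ _ _ Hbf) as Hbf'.
    assert (R1 : D m (psi :: K1 ++ K2 ++ Gm ++ [Box al], al)) by (apply (IH _ phi); fromhyp).
    destruct (boxed_dec psi) as [[z ->]|Hnb].
    + assert (R3 : D m (z :: K1 ++ K2 ++ Gm ++ [Box al], al)) by (apply LemA; fromhyp).
      finish (R_SLtR (K1 ++ K2) (z :: Gm) al Hbf').
    + finish (R_SLtR (psi :: K1 ++ K2) Gm al (bf_cons _ _ Hnb Hbf')).
  - locate Hp. assert (R1 : D m (psi :: Imp a (Imp b c') :: K1 ++ K2, d)) by (apply (IH _ phi); fromhyp).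
    finish (R_AndImpL (psi :: K1 ++ K2) a b c' d).
  - locate Hp. assert (R1 : D m (psi :: Imp a c' :: Imp b c' :: K1 ++ K2, d)) by (apply (IH _ phi); fromhyp).
    finish (R_OrImpL (psi :: K1 ++ K2) a b c' d).
  - locate Hp. assert (R1 : D m (psi :: Imp b c' :: K1 ++ K2, Imp a b)) by (apply (IH _ phi); fromhyp).
    assert (R2 : D m (psi :: c' :: K1 ++ K2, d)) by (apply (IH _ phi); fromhyp).
    finish (R_ImpImpL (psi :: K1 ++ K2) a b c' d).
Qed.

Theorem mainTheorem8 :
  forall (Delta : list form) (phi psi chi : form) (t : ptree) (h : nat),
    is_proof t ->
    seq_eq (root t) (Delta ++ [Imp (Box phi) psi], chi) ->
    height t = h ->
    exists t' : ptree,
      is_proof t' /\ seq_eq (root t') (Delta ++ [psi], chi) /\ height t' <= h.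
Proof.
  intros Delta phi psi chi t h Ht He Hh.
  assert (HD : D h (Imp (Box phi) psi :: Delta, chi)).
  { exists t. split; [auto|split; [|lia]]. destruct He as [Hp Hc]; split; simpl in *;
    [eapply Permutation_trans; [exact Hp| apply Permutation_sym, Permutation_cons_append] | auto]. }
  apply LemB in HD. destruct HD as [t' [H1 [[Hp Hc] H3]]]. exists t'.
  split; [auto|split; [|auto]]. split; simpl in *; [|auto].
  eapply Permutation_trans; [exact Hp| apply Permutation_cons_append].
Qed.
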